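(* Let $I$ be a binary, friendship-uniform instance with common friendship value $\phi=\phi_{\min}>1$ whose friendship graph $(N,F^* )$ has maximum degree $1$, and let $A$ be the (random) allocation output by FF-CT-RSD$^*$ on $I$ when all agents report their friendships truthfully and choose plots to maximize their utility. Then $\mathbb E(\mathrm{SW}(A))\ge\frac14\,\mathrm{OPT}(I)$.
   Context: Instance: agents $N$, $n=|N|$ plots $\mathcal V$, undirected plot graph $(\mathcal V,\mathcal E)$, valuations $u_i:\mathcal V\to\{0,1\}$ (binary), reciprocal friendship relation $F$ with $\phi_{i,j}=\phi$ for all $(i,j)\in F$ (friendship-uniform); $F^*=\{\{i,j\}:(i,j)\in F\}$. For an allocation (bijection) $A:N\to\mathcal V$, $U_i(A)=u_i(A(i))+\sum_{(i,j)\in F}\phi\,\mathbb I(\{A(i),A(j)\}\in\mathcal E)$, $\mathrm{SW}(A)=\sum_iU_i(A)$, $\mathrm{OPT}(I)=\max_A\mathrm{SW}(A)$. RSD$^*$: in each iteration, the remaining agents report whether they value some still-available plot positively; if some do, one of them is chosen uniformly at random and picks a plot; otherwise remaining agents are arbitrarily paired with remaining plots and the procedure stops. FF-CT-RSD$^*$: each agent reports a friend (or none); let $P$ be the set of pairs $\{i,j\}$ who report each other. While there exists a pair of adjacent unoccupied plots and $P\ne\emptyset$, a pair $\{i,j\}$ is removed from $P$ uniformly at random and $i$ and $j$ pick plots consecutively (in random order). Once $P=\emptyset$ or no two adjacent plots are unoccupied, RSD$^*$ is run on the remaining agents and plots. Expectation is over the mechanism's randomness. *)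

(* Defs.v *)
From HB Require Import structures.
From mathcomp Require Import all_boot all_order all_algebra.
Set Implicit Arguments. Unset Strict Implicit. Unset Printing Implicit Defensive.
Import Order.TTheory GRing.Theory Num.Theory.
Local Open Scope ring_scope.

Section Model.
Variables (R : realFieldType) (N V : finType).
Variable E : rel V.
Variable u : N -> V -> bool.
Variable F : rel N.
Variable phi : R.

Definition util (A : {ffun N -> V}) (i : N) : R :=
  (u i (A i))%:R + \sum_(j | F i j) phi * (E (A i) (A j))%:R.

Definition SW (A : {ffun N -> V}) : R := \sum_i util A i.

(* OPT(I) = max over bijections N -> V (injective, #|N| = #|V|) of SW;
   SW >= 0, so starting the max at 0 is harmless. *)
Definition OPT : R :=
  \big[Order.max/0]_(A : {ffun N -> V} | injectiveb A) SW A.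

Definition palloc := {ffun N -> option V}.
Definition free (pa : palloc) (v : V) : bool := [forall x, pa x != Some v].
Definition placed (pa : palloc) (i : N) (v : V) : palloc :=
  [ffun x => if x == i then Some v else pa x].
Definition adjfree (pa : palloc) : bool :=
  [exists v, exists w, [&& v != w, E v w, free pa v & free pa w]].
Definition pinj (pa : palloc) : Prop :=
  forall x y v, pa x = Some v -> pa y = Some v -> x = y.

(* the "arbitrary pairing" of remaining agents with remaining plots *)
Definition completion_ok (c : palloc -> {ffun N -> V}) : Prop :=
  forall pa, pinj pa -> injective (c pa) /\ (forall i v, pa i = Some v -> c pa i = v).

(* behaviour (choice) functions of the agents, indexed by the remaining
   step budget k (a function of the history):
   s1 k P pa a b : plot picked by a, first of the pair {a,b} (P = remaining pairs)
   s2 k P pa b   : plot picked by b, second of its pair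
   s3 k pa i     : plot picked by i in RSD* *)
Record strat := Strat {
  s1 : nat -> {set {set N}} -> palloc -> N -> N -> V;
  s2 : nat -> {set {set N}} -> palloc -> N -> V;
  s3 : nat -> palloc -> N -> V }.

Variable c : palloc -> {ffun N -> V}.
Variable st : strat.

Definition rsd_set (pa : palloc) : {set N} :=
  [set i | (pa i == None) && [exists v, free pa v && u i v]].

(* expectation of f over the outcome of RSD* started at pa (budget k) *)
Fixpoint run2 (k : nat) (pa : palloc) (f : {ffun N -> V} -> R) : R :=
  match k with
  | 0 => f (c pa)
  | k'.+1 =>
    let S := rsd_set pa in
    if S == set0 then f (c pa) else
    \sum_(i in S) (#|S|%:R)^-1 * run2 k' (placed pa i (s3 st k' pa i)) f
  end.

(* expectation of f over the outcome of the friend phase of FF-CT-RSD*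
   (remaining pairs P), followed by RSD* *)
Fixpoint run1 (k : nat) (P : {set {set N}}) (pa : palloc)
    (f : {ffun N -> V} -> R) : R :=
  match k with
  | 0 => f (c pa)
  | k'.+1 =>
    if (P != set0) && adjfree pa then
      \sum_(p in P) (#|P|%:R)^-1 *
        \sum_(ab : N * N | (ab.1 != ab.2) && (p == [set ab.1; ab.2]))
          2^-1 *
          (let P' := P :\ p in
           let pa1 := placed pa ab.1 (s1 st k' P' pa ab.1 ab.2) in
           let pa2 := placed pa1 ab.2 (s2 st k' P' pa1 ab.2) in
           run1 k' P' pa2 f)
    else run2 k pa f
  end.

(* utility maximisation (subgame-perfect, in expectation) of every choice *)
Definition rational : Prop :=
  (forall k P pa a b, (exists v, free pa v) ->
     free pa (s1 st k P pa a b) /\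
     forall w, free pa w ->
       let val x := (let pa1 := placed pa a x in
                     run1 k P (placed pa1 b (s2 st k P pa1 b)) (util^~ a)) in
       val w <= val (s1 st k P pa a b)) /\
  (forall k P pa b, (exists v, free pa v) ->
     free pa (s2 st k P pa b) /\
     forall w, free pa w ->
       run1 k P (placed pa b w) (util^~ b)
         <= run1 k P (placed pa b (s2 st k P pa b)) (util^~ b)) /\
  (forall k pa i, (exists v, free pa v) ->
     free pa (s3 st k pa i) /\
     forall w, free pa w ->
       run2 k (placed pa i w) (util^~ i)
         <= run2 k (placed pa i (s3 st k pa i)) (util^~ i)).

(* truthful friend reports: each agent reports its (unique) friend, if any *)
Definition report (i : N) : option N := [pick j | F i j].

Definition P0 : {set {set N}} :=
  [set p : {set N} | [exists i, exists j,
     [&& report i == Some j, report j == Some i & p == [set i; j]]]].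

Definition empty_alloc : palloc := [ffun => None].

Definition expected_SW : R := run1 #|N| P0 empty_alloc SW.

End Model.

(* Main.v *)
Require Import Defs.
From HB Require Import structures.
From mathcomp Require Import all_boot all_order all_algebra.
From mathcomp Require Import zify ring lra.
Set Implicit Arguments. Unset Strict Implicit. Unset Printing Implicit Defensive.
Import Order.TTheory GRing.Theory Num.Theory.
Local Open Scope ring_scope.

Section Pf.
Variables (R : realFieldType) (N V : finType) (E : rel V) (u : N -> V -> bool)
  (F : rel N) (phi : R) (c : palloc N V -> {ffun N -> V}) (st : strat N V).

Local Notation r1 := (@run1 R N V E u c st).
Local Notation r2 := (@run2 R N V u c st).
Local Notation free := Defs.free.

Definition ext (pa : palloc N V) (A : {ffun N -> V}) :=
  forall i v, pa i = Some v -> A i = v.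

Lemma r2_ext k pa f g : (forall A, f A = g A) -> r2 k pa f = r2 k pa g.
Proof.
move=> fg; elim: k pa => [|k IH] pa /=; first by [].
case: ifP => _; first by []. by apply: eq_bigr => i _; rewrite IH.
Qed.

Lemma r2_add k pa f g : r2 k pa (fun A => f A + g A) = r2 k pa f + r2 k pa g.
Proof.
elim: k pa => [|k IH] pa /=; first by [].
case: ifP => _; first by []. rewrite -big_split; apply: eq_bigr => i _.
by rewrite IH mulrDr.
Qed.

Lemma wsum (T : finType) (S : {set T}) (K : R) :
  S != set0 -> \sum_(i in S) (#|S|%:R)^-1 * K = K.
Proof.
move=> hS; rewrite sumr_const -mulrnAl -mulr_natr mulVf ?mul1r //.
by rewrite pnatr_eq0 -lt0n card_gt0.
Qed.

Lemma r2_const k pa K : r2 k pa (fun _ => K) = K.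
Proof.
elim: k pa => [|k IH] pa /=; first by [].
case: ifP => hS; first by [].
under eq_bigr => i _ do rewrite IH.
by rewrite wsum // hS.
Qed.

Lemma r1_ext k P pa f g : (forall A, f A = g A) -> r1 k P pa f = r1 k P pa g.
Proof.
move=> fg; elim: k P pa => [|k IH] P pa /=; first by [].
case: ifP => _; last exact: (r2_ext k.+1 pa fg).
apply: eq_bigr => p _; congr (_ * _); apply: eq_bigr => ab _.
by rewrite IH.
Qed.

Lemma r1_add k P pa f g : r1 k P pa (fun A => f A + g A) = r1 k P pa f + r1 k P pa g.
Proof.
elim: k P pa => [|k IH] P pa /=; first by [].
case: ifP => _; last exact: (r2_add k.+1 pa f g).
rewrite -big_split /=; apply: eq_bigr => p _ /=. rewrite -mulrDr -big_split /=.
congr (_ * _); apply: eq_bigr => ab _.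
by rewrite IH mulrDr.
Qed.


Hypothesis Hcomp : completion_ok c.
Hypothesis Hrat : rational E u F phi c st.
Hypothesis Fsym : symmetric F.
Hypothesis Firr : irreflexive F.
Hypothesis Fdeg : forall i j k, F i j -> F i k -> j = k.
Hypothesis Esym : symmetric E.

Lemma rat1 k P pa a b : (exists v, free pa v) ->
  free pa (s1 st k P pa a b) /\
  forall w, free pa w ->
    r1 k P (placed (placed pa a w) b (s2 st k P (placed pa a w) b)) (util E u F phi ^~ a)
    <= r1 k P (placed (placed pa a (s1 st k P pa a b)) b
                 (s2 st k P (placed pa a (s1 st k P pa a b)) b)) (util E u F phi ^~ a).
Proof. by case: Hrat => h _; apply: h. Qed.

Lemma rat2 k P pa b : (exists v, free pa v) ->
  free pa (s2 st k P pa b) /\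
  forall w, free pa w ->
    r1 k P (placed pa b w) (util E u F phi ^~ b)
    <= r1 k P (placed pa b (s2 st k P pa b)) (util E u F phi ^~ b).
Proof. by case: Hrat => _ [h _]; apply: h. Qed.

Lemma rat3 k pa i : (exists v, free pa v) ->
  free pa (s3 st k pa i) /\
  forall w, free pa w ->
    r2 k (placed pa i w) (util E u F phi ^~ i)
    <= r2 k (placed pa i (s3 st k pa i)) (util E u F phi ^~ i).
Proof. by case: Hrat => _ [_ h]; apply: h. Qed.

Lemma c_ext (pa : palloc N V) : pinj pa -> ext pa (c pa).
Proof. by move=> h i v hi; case: (Hcomp h) => _; apply. Qed.

Lemma placed_ext (pa : palloc N V) i v A : pa i = None -> ext (placed pa i v) A -> ext pa A.
Proof.
move=> hi e j w hj; apply: e; rewrite /placed ffunE.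
case: eqP => [ji|//]; by rewrite ji hi in hj.
Qed.

Lemma placed_at (pa : palloc N V) i v A : ext (placed pa i v) A -> A i = v.
Proof. by move=> e; apply: e; rewrite /placed ffunE eqxx. Qed.

Lemma freeP (pa : palloc N V) v t : free pa v -> pa t <> Some v.
Proof. by move=> /forallP /(_ t) /eqP. Qed.

Lemma placed_pinj (pa : palloc N V) i v : pinj pa -> free pa v -> pinj (placed pa i v).
Proof.
move=> hp hf x y w; rewrite /placed !ffunE.
case: eqP => [->|xi]; case: eqP => [->|yi] //.
- move=> [<-] hy; by case: (freeP (t:=y) hf).
- move=> hx [eq]; rewrite -eq in hx; by case: (freeP (t:=x) hf).
- exact: hp.
Qed.

Lemma free_placed (pa : palloc N V) i x v : free pa v -> v != x -> free (placed pa i x) v.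
Proof.
move=> hf vx; apply/forallP => t; rewrite /placed ffunE.
case: (t =P i) => _; first by apply/negP => /eqP [xv]; rewrite xv eqxx in vx.
by apply/negP => /eqP; apply: freeP.
Qed.

Lemma r2_mono k pa f g : pinj pa -> (forall A, ext pa A -> f A <= g A) ->
  r2 k pa f <= r2 k pa g.
Proof.
elim: k pa => [|k IH] pa hp hfg /=; first by apply: hfg; apply: c_ext.
case: ifP => hS; first by apply: hfg; apply: c_ext.
apply: ler_sum => i; rewrite inE => /andP [/eqP hi /existsP [v /andP [fv _]]].
apply: ler_wpM2l; first by rewrite invr_ge0 ler0n.
have [fs _] := rat3 k i (ex_intro _ v fv).
apply: IH; first exact: placed_pinj.
move=> A hA; apply: hfg; exact: placed_ext hA.
Qed.

Lemma r2_lb k pa f K : pinj pa -> (forall A, ext pa A -> K <= f A) -> K <= r2 k pa f.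
Proof.
move=> hp h; rewrite -[X in X <= _](r2_const k pa K); exact: r2_mono.
Qed.


Lemma set2_eq (a b i j : N) : a != b -> [set a; b] = [set i; j] ->
  (a = i /\ b = j) \/ (a = j /\ b = i).
Proof.
move=> ab e.
have ha : a \in [set i; j] by rewrite -e set21.
have hb : b \in [set i; j] by rewrite -e set22.
have hi : i \in [set a; b] by rewrite e set21.
move: ha hb hi; rewrite !inE => /orP [] /eqP ea /orP [] /eqP eb; subst.
- by rewrite eqxx in ab.
- by left.
- by right.
- by rewrite eqxx in ab.
Qed.

Lemma F_neq i j : F i j -> i != j.
Proof. by move=> h; apply/eqP => e; subst; rewrite Firr in h. Qed.

Lemma pair_inter i j i' j' x : F i j -> F i' j' -> x \in [set i; j] -> x \in [set i'; j'] ->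
  [set i; j] = [set i'; j'].
Proof.
move=> h h'; rewrite !inE => /orP [] /eqP ex /orP [] /eqP ex'; rewrite ex in ex'.
- rewrite -ex' in h'; by rewrite -ex' (Fdeg h h').
- have h2 : F j' i' by rewrite Fsym.
  rewrite -ex' in h2; rewrite -ex' -(Fdeg h h2); by rewrite setUC.
- have h1 : F j i by rewrite Fsym.
  rewrite -ex' in h'; by rewrite -ex' (Fdeg h1 h') setUC.
- have h1 : F j i by rewrite Fsym.
  have h2 : F j' i' by rewrite Fsym.
  rewrite -ex' in h2; by rewrite -ex' (Fdeg h1 h2).
Qed.

Definition inv1 (P : {set {set N}}) (pa : palloc N V) :=
  [/\ pinj pa, (forall p, p \in P -> exists i j, F i j /\ p = [set i; j]) &
      (forall p, p \in P -> forall x, x \in p -> pa x = None)].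

Lemma wsum2 (p : {set N}) (K : R) : (exists i j, F i j /\ p = [set i; j]) ->
  \sum_(ab : N * N | (ab.1 != ab.2) && (p == [set ab.1; ab.2])) 2^-1 * K = K.
Proof.
move=> [i [j [hij ->]]].
have ij := F_neq hij.
rewrite (eq_bigl (mem [set (i, j); (j, i)])); last first.
  move=> [a b] /=; rewrite !inE; apply/idP/idP.
  - move=> /andP [ab /eqP e]; case: (set2_eq ab (esym e)) => [[-> ->]|[-> ->]];
    by rewrite eqxx ?orbT.
  - move=> /orP [] /eqP [-> ->] /=; first by rewrite ij eqxx.
    by rewrite eq_sym ij setUC eqxx.
rewrite sumr_const cards2.
have -> : ((i, j) != (j, i)) by apply/negP => /eqP [e _]; rewrite e eqxx in ij.
rewrite /= mulr2n; lra.
Qed.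

Lemma r1_const k (P : {set {set N}}) (pa : palloc N V) (K : R) : (forall p, p \in P -> exists i j, F i j /\ p = [set i; j]) ->
  r1 k P pa (fun _ => K) = K.
Proof.
elim: k P pa => [|k IH] P pa hP /=; first by [].
case: ifP => hc; last exact: (r2_const k.+1 pa K).
move/andP: hc => [hP0 _].
rewrite -[RHS](wsum K hP0); apply: eq_bigr => p hp; congr (_ * _).
rewrite -[RHS](wsum2 K (hP p hp)); apply: eq_bigr => ab _.
rewrite IH // => q; rewrite inE => /andP [_]; exact: hP.
Qed.


Lemma adj_free (pa : palloc N V) : adjfree E pa ->
  exists v w, [/\ v != w, E v w, free pa v & free pa w].
Proof.
move=> /existsP [v /existsP [w /and4P [vw evw fv fw]]]; by exists v, w.
Qed.

Lemma ex_free0 (pa : palloc N V) : adjfree E pa -> exists v, free pa v.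
Proof. by move=> /adj_free [v [w [_ _ fv _]]]; exists v. Qed.

Lemma ex_free1 (pa : palloc N V) a z : adjfree E pa -> exists v, free (placed pa a z) v.
Proof.
move=> /adj_free [v [w [vw _ fv fw]]].
case: (v =P z) => [vz|vz]; last by exists v; apply: free_placed => //; apply/eqP.
exists w; apply: free_placed => //; apply/eqP => wz; move/eqP: vw; apply.
by rewrite vz wz.
Qed.

Lemma step_inv P (pa : palloc N V) p a b x y : inv1 P pa -> p \in P -> a != b ->
  p = [set a; b] -> free pa x -> free (placed pa a x) y ->
  inv1 (P :\ p) (placed (placed pa a x) b y) /\
  (forall A, ext (placed (placed pa a x) b y) A -> ext pa A).
Proof.
case=> hp h2 h3 hpP ab ep fx fy.
have ha : pa a = None by apply: (h3 p hpP); rewrite ep set21.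
have hb : pa b = None by apply: (h3 p hpP); rewrite ep set22.
have hb1 : placed pa a x b = None by rewrite /placed ffunE eq_sym (negbTE ab).
split; last first.
  move=> A hA; apply: (placed_ext ha); exact: (placed_ext hb1 hA).
split.
- apply: placed_pinj => //; exact: placed_pinj.
- move=> q; rewrite inE => /andP [_]; exact: h2.
- move=> q; rewrite !inE => /andP [qp hq] z hz.
  have [i [j [hij eq]]] := h2 q hq.
  have [i' [j' [hij' eq']]] := h2 p hpP.
  have key : z \in p -> False.
    move=> zp; suff e : q = p by rewrite e eqxx in qp.
    rewrite eq eq'.
    by apply: (pair_inter (x:=z)) => //; rewrite -?eq -?eq'.
  have za : z != a by apply/eqP => ez; apply: key; rewrite ep ez set21.
  have zb : z != b by apply/eqP => ez; apply: key; rewrite ep ez set22.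
  rewrite /placed !ffunE (negbTE zb) (negbTE za); exact: h3 q hq z hz.
Qed.

Lemma r1_mono k P pa f g : inv1 P pa -> (forall A, ext pa A -> f A <= g A) ->
  r1 k P pa f <= r1 k P pa g.
Proof.
elim: k P pa => [|k IH] P pa hI hfg; case: (hI) => hp _ _.
  by apply: hfg; apply: c_ext.
rewrite /=; case: ifP => hc; last first.
  change (r2 k.+1 pa f <= r2 k.+1 pa g); exact: r2_mono.
move/andP: hc => [hP0 hadj].
apply: ler_sum => p hp0.
apply: ler_wpM2l; first by rewrite invr_ge0 ler0n.
apply: ler_sum => -[a b] /= /andP [ab /eqP ep].
apply: ler_wpM2l; first by rewrite invr_ge0 ler0n.
have [fx _] := rat1 k (P :\ p) a b (ex_free0 hadj).
have [fy _] := rat2 k (P :\ p) b (ex_free1 a (s1 st k (P :\ p) pa a b) hadj).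
have [hI' hE] := step_inv hI hp0 ab ep fx fy.
apply: IH hI' _ => A hA; exact: hfg (hE A hA).
Qed.

Lemma r1_lb k P pa f K : inv1 P pa -> (forall A, ext pa A -> K <= f A) ->
  K <= r1 k P pa f.
Proof.
move=> hI h; case: (hI) => _ h2 _.
rewrite -[X in X <= _](r1_const k pa K h2); exact: r1_mono.
Qed.

Lemma r1_ub k P pa f K : inv1 P pa -> (forall A, ext pa A -> f A <= K) ->
  r1 k P pa f <= K.
Proof.
move=> hI h; case: (hI) => _ h2 _.
rewrite -[X in _ <= X](r1_const k pa K h2); exact: r1_mono.
Qed.

Lemma r1_eqc k P pa f K : inv1 P pa -> (forall A, ext pa A -> f A = K) ->
  r1 k P pa f = K.
Proof.
move=> hI h; apply/eqP; rewrite eq_le; apply/andP; split.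
- by apply: r1_ub => // A hA; rewrite h.
- by apply: r1_lb => // A hA; rewrite h.
Qed.


Lemma cardU_le (T : finType) (A B : {set T}) : (#|A :|: B| <= #|A| + #|B|)%N.
Proof. by rewrite cardsU leq_subr. Qed.

Section Main.
Variable Astar : {ffun N -> V}.
Hypothesis Ainj : injective Astar.

Definition Un (pa : palloc N V) :=
  #|[set i | [&& pa i == None, u i (Astar i) & free pa (Astar i)]]|.
Definition Dn (pa : palloc N V) :=
  #|[set ij : N * N | [&& F ij.1 ij.2, E (Astar ij.1) (Astar ij.2),
                         free pa (Astar ij.1) & free pa (Astar ij.2)]]|.
Definition Cn (P : {set {set N}}) :=
  #|[set ij : N * N | F ij.1 ij.2 && ([set ij.1; ij.2] \in P)]|.
Definition unpl (pa : palloc N V) := #|[set i | pa i == None]|.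

Lemma card_pre1 z : (#|[set i | Astar i == z]| <= 1)%N.
Proof.
apply/card_le1_eqP => i j; rewrite !inE => /eqP hi /eqP hj; apply: Ainj.
by rewrite hi hj.
Qed.

Lemma card_fst z : (#|[set ij : N * N | F ij.1 ij.2 && (Astar ij.1 == z)]| <= 1)%N.
Proof.
apply/card_le1_eqP => -[i j] [i' j']; rewrite !inE /= => /andP [hij /eqP hi] /andP [hij' /eqP hi'].
have e : i = i' by apply: Ainj; rewrite hi hi'.
subst i'; by rewrite (Fdeg hij hij').
Qed.

Lemma card_snd z : (#|[set ij : N * N | F ij.1 ij.2 && (Astar ij.2 == z)]| <= 1)%N.
Proof.
apply/card_le1_eqP => -[i j] [i' j']; rewrite !inE /= => /andP [hij /eqP hi] /andP [hij' /eqP hi'].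
have e : j = j' by apply: Ainj; rewrite hi hi'.
subst j'; rewrite Fsym in hij; rewrite Fsym in hij'; by rewrite (Fdeg hij hij').
Qed.

Lemma free_placed2 (pa : palloc N V) a b x y q : free pa q -> q != x -> q != y ->
  free (placed (placed pa a x) b y) q.
Proof. by move=> h1 h2 h3; apply: free_placed => //; apply: free_placed. Qed.

Lemma Un_drop1 (pa : palloc N V) j v : (Un pa <= Un (placed pa j v) + 2)%N.
Proof.
rewrite /Un.
set S2 := [set i | [&& placed pa j v i == None, u i (Astar i) & free (placed pa j v) (Astar i)]].
have sub : [set i | [&& pa i == None, u i (Astar i) & free pa (Astar i)]]
   \subset S2 :|: [set j] :|: [set i | Astar i == v].
  apply/subsetP => i; rewrite !inE => /and3P [hn hu hf].
  case: (i =P j) => [->|ij]; first by rewrite ?eqxx !(orbT, orTb).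
  case: (Astar i =P v) => [->|iv]; first by rewrite ?eqxx !(orbT, orTb).
  apply/orP; left; apply/orP; left; apply/and3P; split => //.
    by rewrite /placed ffunE; case: (i =P j).
  by apply: free_placed => //; apply/eqP.
apply: (leq_trans (subset_leq_card sub)).
have := cardU_le (S2 :|: [set j]) [set i | Astar i == v].
have := cardU_le S2 [set j].
have := card_pre1 v. rewrite cards1. lia.
Qed.

Lemma Un_drop2 (pa : palloc N V) a b x y : (Un pa <= Un (placed (placed pa a x) b y) + 4)%N.
Proof.
rewrite /Un.
set pa2 := placed (placed pa a x) b y.
set S2 := [set i | [&& pa2 i == None, u i (Astar i) & free pa2 (Astar i)]].
have sub : [set i | [&& pa i == None, u i (Astar i) & free pa (Astar i)]]
   \subset S2 :|: [set a; b] :|: [set i | Astar i == x] :|: [set i | Astar i == y].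
  apply/subsetP => i; rewrite !inE => /and3P [hn hu hf].
  case: (i =P a) => [->|ia]; first by rewrite ?eqxx !(orbT, orTb).
  case: (i =P b) => [->|ib]; first by rewrite ?eqxx !(orbT, orTb).
  case: (Astar i =P x) => [->|ix]; first by rewrite ?eqxx !(orbT, orTb).
  case: (Astar i =P y) => [->|iy]; first by rewrite ?eqxx !(orbT, orTb).
  apply/orP; left; apply/orP; left; apply/orP; left; apply/and3P; split => //.
    by rewrite /placed !ffunE; case: (i =P b) => // _; case: (i =P a).
  by apply: free_placed2 => //; apply/eqP.
apply: (leq_trans (subset_leq_card sub)).
have := cardU_le (S2 :|: [set a; b] :|: [set i | Astar i == x]) [set i | Astar i == y].
have := cardU_le (S2 :|: [set a; b]) [set i | Astar i == x].
have := cardU_le S2 [set a; b].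
have : (#|[set a; b]| <= 2)%N by rewrite cards2; case: (a != b).
have := card_pre1 x; have := card_pre1 y. lia.
Qed.


Lemma Dn_drop (pa : palloc N V) a b x y : (Dn pa <= Dn (placed (placed pa a x) b y) + 4)%N.
Proof.
rewrite /Dn.
set pa2 := placed (placed pa a x) b y.
set S2 := [set ij : N * N | [&& F ij.1 ij.2, E (Astar ij.1) (Astar ij.2),
                         free pa2 (Astar ij.1) & free pa2 (Astar ij.2)]].
set X1 := fun z => [set ij : N * N | F ij.1 ij.2 && (Astar ij.1 == z)].
set X2 := fun z => [set ij : N * N | F ij.1 ij.2 && (Astar ij.2 == z)].
have sub : [set ij : N * N | [&& F ij.1 ij.2, E (Astar ij.1) (Astar ij.2),
                         free pa (Astar ij.1) & free pa (Astar ij.2)]]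
   \subset S2 :|: X1 x :|: X2 x :|: X1 y :|: X2 y.
  apply/subsetP => -[i j]; rewrite !inE /= => /and4P [hij he hfi hfj].
  rewrite hij /=.
  case: (Astar i =P x) => [->|ix]; first by rewrite ?eqxx !(orbT, orTb).
  case: (Astar j =P x) => [->|jx]; first by rewrite ?eqxx !(orbT, orTb).
  case: (Astar i =P y) => [->|iy]; first by rewrite ?eqxx !(orbT, orTb).
  case: (Astar j =P y) => [->|jy]; first by rewrite ?eqxx !(orbT, orTb).
  rewrite he /= !free_placed2 //; by apply/eqP.
apply: (leq_trans (subset_leq_card sub)).
have := cardU_le (S2 :|: X1 x :|: X2 x :|: X1 y) (X2 y).
have := cardU_le (S2 :|: X1 x :|: X2 x) (X1 y).
have := cardU_le (S2 :|: X1 x) (X2 x).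
have := cardU_le S2 (X1 x).
have := card_fst x; have := card_fst y; have := card_snd x; have := card_snd y.
rewrite /X1 /X2. lia.
Qed.

Lemma Cn_drop (P : {set {set N}}) a b : (Cn P <= Cn (P :\ [set a; b]) + 2)%N.
Proof.
rewrite /Cn.
set S2 := [set ij : N * N | F ij.1 ij.2 && ([set ij.1; ij.2] \in P :\ [set a; b])].
have sub : [set ij : N * N | F ij.1 ij.2 && ([set ij.1; ij.2] \in P)]
   \subset S2 :|: [set (a, b); (b, a)].
  apply/subsetP => -[i j]; rewrite !inE /= => /andP [hij hP].
  rewrite hij hP /= andbT.
  case: ([set i; j] =P [set a; b]) => [e|ne]; last by [].
  case: (set2_eq (F_neq hij) e) => [[-> ->]|[-> ->]]; by rewrite ?eqxx !(orbT, orTb).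
apply: (leq_trans (subset_leq_card sub)).
have := cardU_le S2 [set (a, b); (b, a)].
have : (#|[set (a, b); (b, a)]| <= 2)%N by rewrite cards2; case: (_ != _).
lia.
Qed.

Lemma unpl_lt (pa : palloc N V) i v : pa i = None -> (unpl (placed pa i v) < unpl pa)%N.
Proof.
move=> hi; apply: proper_card; apply/properP; split.
  apply/subsetP => j; rewrite !inE /placed ffunE; by case: (j =P i).
exists i; first by rewrite inE hi.
by rewrite inE /placed ffunE eqxx.
Qed.

Lemma Un_le_unpl pa : (Un pa <= unpl pa)%N.
Proof.
apply: subset_leq_card; apply/subsetP => i; rewrite !inE; by case/and3P.
Qed.


Hypothesis phi_gt1 : 1 < phi.

Lemma phi_ge0 : 0 <= phi.
Proof. by apply: le_trans (ltW phi_gt1). Qed.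

Definition Fu (pa : palloc N V) (A : {ffun N -> V}) :=
  \sum_(i | pa i == None) util E u F phi A i.

Lemma util_ge_u (A : {ffun N -> V}) i : (u i (A i))%:R <= util E u F phi A i.
Proof.
rewrite /util lerDl; apply: sumr_ge0 => j _; apply: mulr_ge0 => //; exact: phi_ge0.
Qed.

Lemma util_ge0 (A : {ffun N -> V}) i : 0 <= util E u F phi A i.
Proof. exact: le_trans (util_ge_u A i). Qed.

Lemma Fu_ge0 (pa : palloc N V) (A : {ffun N -> V}) : 0 <= Fu pa A.
Proof. by apply: sumr_ge0 => i _; apply: util_ge0. Qed.

Lemma Fu_split (pa : palloc N V) i v : pa i = None ->
  forall A, Fu pa A = util E u F phi A i + Fu (placed pa i v) A.
Proof.
move=> hi A; rewrite /Fu (bigD1 i) /=; last by rewrite hi.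
congr (_ + _); apply: eq_bigl => j; rewrite /placed ffunE.
by case: (j =P i) => [->|_]; rewrite ?andbF ?andbT.
Qed.

Lemma util_one (A : {ffun N -> V}) i j : (forall t, F i t = (t == j)) ->
  util E u F phi A i = (u i (A i))%:R + phi * (E (A i) (A j))%:R.
Proof. by move=> h; rewrite /util (eq_bigl (fun t => t == j)) ?big_pred1_eq. Qed.

Lemma rsd_main k (pa : palloc N V) : pinj pa -> (unpl pa <= k)%N -> (Un pa)%:R / 4 <= r2 k pa (Fu pa).
Proof.
elim: k pa => [|k IH] pa hp hk.
  have -> : Un pa = 0%N by have := Un_le_unpl pa; lia.
  rewrite mul0r /=; exact: Fu_ge0.
rewrite /=; case: ifP => hS.
  have -> : Un pa = 0%N.
    apply/eqP; rewrite cards_eq0; apply/eqP/setP => i; rewrite !inE.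
    apply/negbTE/negP => /and3P [hn hu hf].
    have : i \in rsd_set u pa.
      rewrite inE hn /=; apply/existsP; exists (Astar i); by rewrite hf hu.
    by rewrite (eqP hS) inE.
  rewrite mul0r; exact: Fu_ge0.
rewrite -[X in X <= _](wsum _ (negbT hS)); apply: ler_sum => i hi.
apply: ler_wpM2l; first by rewrite invr_ge0 ler0n.
move: (hi); rewrite inE => /andP [/eqP hn /existsP [v /andP [fv uv]]].
have [fs hbest] := @rat3 k pa i (ex_intro _ v fv).
set w := s3 st k pa i.
rewrite (r2_ext k (placed pa i w) (Fu_split w hn)) r2_add.
have h1 : 1 <= r2 k (placed pa i w) (util E u F phi ^~ i).
  apply: le_trans (hbest v fv); apply: r2_lb; first exact: placed_pinj.
  move=> A hA; apply: le_trans (util_ge_u A i); by rewrite (placed_at hA) uv.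
have hk' : (unpl (placed pa i w) <= k)%N by have := unpl_lt w hn; lia.
have h2 := IH (placed pa i w) (placed_pinj (i:=i) hp fs) hk'.
have h3 : ((Un pa)%:R <= (Un (placed pa i w) + 2)%:R :> R) by rewrite ler_nat Un_drop1.
rewrite natrD in h3.
lra.
Qed.


Lemma friends P (pa : palloc N V) p a b : inv1 P pa -> p \in P -> a != b ->
  p = [set a; b] -> F a b.
Proof.
case=> _ h2 _ hp ab ep; have [i [j [hij e]]] := h2 p hp.
rewrite ep in e; case: (set2_eq ab e) => [[-> ->]|[-> ->]] //; by rewrite Fsym.
Qed.

Lemma only_friend a b : F a b -> forall t, F a t = (t == b).
Proof.
move=> hab t; apply/idP/eqP => [h|->] //; exact: (Fdeg h hab).
Qed.

Lemma nat_le1 (bb : bool) : (bb%:R : R) <= 1.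
Proof. by case: bb; rewrite ?ler01 ?lexx. Qed.

Lemma pair_value k P pa p a b : inv1 P pa -> p \in P -> a != b -> p = [set a; b] ->
  adjfree E pa ->
  let x := s1 st k (P :\ p) pa a b in
  let y := s2 st k (P :\ p) (placed pa a x) b in
  phi <= r1 k (P :\ p) (placed (placed pa a x) b y) (util E u F phi ^~ a) /\
  phi <= r1 k (P :\ p) (placed (placed pa a x) b y) (util E u F phi ^~ b).
Proof.
move=> hI hp ab ep hadj x y.
have fab := friends hI hp ab ep.
have fba : F b a by rewrite Fsym.
have oa := only_friend fab; have ob := only_friend fba.
have hA2 : forall z w (A : {ffun N -> V}), ext (placed (placed pa a z) b w) A ->
    A a = z /\ A b = w.
  move=> z w A hA; split; last exact: placed_at hA.
  by apply: hA; rewrite /placed !ffunE (negbTE ab) eqxx.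
have valb : forall z w, free pa z -> free (placed pa a z) w ->
   r1 k (P :\ p) (placed (placed pa a z) b w) (util E u F phi ^~ b)
   = (u b w)%:R + phi * (E w z)%:R.
  move=> z w fz fw; have [hI' _] := step_inv hI hp ab ep fz fw.
  apply: r1_eqc hI' _ => A hA; rewrite (util_one A ob).
  by case: (hA2 _ _ _ hA) => -> ->.
have vala : forall z w, free pa z -> free (placed pa a z) w ->
   r1 k (P :\ p) (placed (placed pa a z) b w) (util E u F phi ^~ a)
   = (u a z)%:R + phi * (E z w)%:R.
  move=> z w fz fw; have [hI' _] := step_inv hI hp ab ep fz fw.
  apply: r1_eqc hI' _ => A hA; rewrite (util_one A oa).
  by case: (hA2 _ _ _ hA) => -> ->.
have yfree : forall z, free pa z -> free (placed pa a z) (s2 st k (P :\ p) (placed pa a z) b).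
  by move=> z fz; case: (@rat2 k (P :\ p) (placed pa a z) b (ex_free1 a z hadj)).
have adjresp : forall z w, free pa z -> free (placed pa a z) w -> E w z ->
    E (s2 st k (P :\ p) (placed pa a z) b) z.
  move=> z w fz fw ewz.
  have [_ hb] := @rat2 k (P :\ p) (placed pa a z) b (ex_free1 a z hadj).
  have := hb w fw; rewrite !valb // ?yfree // ewz.
  apply: contraTT => hne; rewrite (negbTE hne) /= mulr0 addr0 mulr1n -ltNge.
  have := nat_le1 (u b (s2 st k (P :\ p) (placed pa a z) b)).
  have : (0 : R) <= (u b w)%:R by apply: ler0n.
  have := phi_gt1; lra.
have [v [w [vw evw fv fw]]] := adj_free hadj.
have fw1 : free (placed pa a v) w by apply: free_placed => //; rewrite eq_sym.
have ev : E (s2 st k (P :\ p) (placed pa a v) b) v.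
  by apply: (adjresp v w fv fw1); rewrite Esym.
have [fx hbest] := @rat1 k (P :\ p) pa a b (ex_free0 hadj).
have hv := hbest v fv.
rewrite vala // ?yfree // Esym ev /= ?mulr1n ?mulr1 in hv.
have hpv : phi <= (u a v)%:R + phi by rewrite lerDr ler0n.
have hx := le_trans hpv hv.
split; first exact: hx.
have fy : free (placed pa a x) y by exact: yfree.
rewrite vala // in hx.
have exy : E x y.
  apply/negPn/negP => hne; move: hx; rewrite (negbTE hne) /= mulr0 addr0.
  have := nat_le1 (u a x); have := phi_gt1; lra.
rewrite valb // Esym exy /= ?mulr1n ?mulr1 lerDr; exact: ler0n.
Qed.


Lemma card0_of (T : finType) (Q : pred T) : (forall x, ~~ Q x) -> #|[set x | Q x]| = 0%N.
Proof.
move=> h; apply/eqP; rewrite cards_eq0; apply/eqP/setP => x; rewrite !inE.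
exact/negbTE.
Qed.

Lemma fr_main k P (pa : palloc N V) X : inv1 P pa -> (unpl pa <= k)%N ->
  (X <= Dn pa)%N -> (X <= Cn P)%N ->
  (Un pa)%:R / 4 + phi / 4 * X%:R <= r1 k P pa (Fu pa).
Proof.
elim: k P pa X => [|k IH] P pa X hI hk hXD hXC.
  have none : forall i, pa i != None.
    move=> i; apply/negP => /eqP hi.
    have : (0 < unpl pa)%N by apply/card_gt0P; exists i; rewrite inE hi.
    lia.
  have hU : Un pa = 0%N by have := Un_le_unpl pa; lia.
  have hC : Cn P = 0%N.
    apply: card0_of => -[i j] /=; apply/negP => /andP [hij hin].
    case: hI => _ _ h3; have := h3 _ hin i (set21 i j); apply/eqP; exact: none.
  have -> : X = 0%N by lia.
  rewrite hU mul0r mulr0 addr0 /=; exact: Fu_ge0.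
rewrite /=; case: ifP => hc; last first.
  have hX : X = 0%N.
    move/negbT: hc; rewrite negb_and negbK => /orP [/eqP P0 | nadj].
      suff : Cn P = 0%N by lia.
      by apply: card0_of => -[i j] /=; rewrite P0 inE andbF.
    suff : Dn pa = 0%N by lia.
    apply: card0_of => -[i j] /=; apply/negP => /and4P [hij he hfi hfj].
    move/negP: nadj; apply; apply/existsP; exists (Astar i); apply/existsP; exists (Astar j).
    rewrite he hfi hfj !andbT; apply/negP => /eqP e.
    by move: (F_neq hij); rewrite (Ainj e) eqxx.
  rewrite hX mulr0 addr0.
  change ((Un pa)%:R / 4 <= r2 k.+1 pa (Fu pa)).
  by apply: rsd_main => //; case: hI.
move/andP: hc => [hP0 hadj].
rewrite -[X in X <= _](wsum _ hP0); apply: ler_sum => p hp.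
apply: ler_wpM2l; first by rewrite invr_ge0 ler0n.
case: (hI) => hpi h2 h3.
rewrite -[X in X <= _](wsum2 _ (h2 p hp)); apply: ler_sum => -[a b] /= /andP [ab /eqP ep].
apply: ler_wpM2l; first by rewrite invr_ge0 ler0n.
have [va vb] := pair_value k hI hp ab ep hadj.
move: va vb.
set x := s1 st k (P :\ p) pa a b.
set y := s2 st k (P :\ p) (placed pa a x) b.
move=> va vb.
have [fx _] := @rat1 k (P :\ p) pa a b (ex_free0 hadj).
have [fy _] := @rat2 k (P :\ p) (placed pa a x) b (ex_free1 a x hadj).
have [hI' _] := step_inv hI hp ab ep fx fy.
have ha : pa a = None by apply: (h3 p hp); rewrite ep set21.
have hb : pa b = None by apply: (h3 p hp); rewrite ep set22.
have hb1 : placed pa a x b = None by rewrite /placed ffunE eq_sym (negbTE ab).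
rewrite (r1_ext k (P :\ p) _ (Fu_split x ha)) r1_add.
rewrite (r1_ext k (P :\ p) _ (Fu_split y hb1)) r1_add.
have hk' : (unpl (placed (placed pa a x) b y) <= k)%N.
  have := unpl_lt x ha; have := unpl_lt y hb1; lia.
have hXD' : (X - 4 <= Dn (placed (placed pa a x) b y))%N.
  have := Dn_drop pa a b x y; lia.
have hXC' : (X - 4 <= Cn (P :\ p))%N.
  have hh : (Cn P <= Cn (P :\ p) + 2)%N by rewrite ep; exact: Cn_drop.
  lia.
have hIH := IH _ _ _ hI' hk' hXD' hXC'.
have hU : ((Un pa)%:R <= (Un (placed (placed pa a x) b y) + 4)%:R :> R).
  by rewrite ler_nat Un_drop2.
rewrite natrD in hU.
have hXr : (X%:R <= (X - 4)%:R + 4 :> R).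
  by rewrite -natrD ler_nat; lia.
have hm := ler_wpM2l (_ : 0 <= phi / 4) hXr.
rewrite mulrDr in hm.
have hp1 := phi_gt1.
have h4 : 0 <= phi / 4 by apply: divr_ge0 => //; lra.
have hm' := hm h4.
lra.
Qed.

End Main.

Lemma card_sum (T : finType) (Q : pred T) :
  (#|[set x | Q x]|%:R : R) = \sum_x (Q x)%:R.
Proof.
rewrite -sum1_card natr_sum big_mkcond /=; apply: eq_bigr => x _.
by rewrite inE; case: (Q x).
Qed.

Lemma free_empty v : free (empty_alloc N V) v.
Proof. by apply/forallP => x; rewrite ffunE. Qed.

Lemma final (hphi : 1 < phi) : OPT E u F phi / 4 <= expected_SW E u F phi c st.
Proof.
have hI0 : inv1 (P0 F) (empty_alloc N V).
  split.
  - by move=> x y v; rewrite /empty_alloc ffunE.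
  - move=> p; rewrite inE => /existsP [i /existsP [j /and3P [/eqP ri /eqP rj /eqP ->]]].
    exists i, j; split => //; move: ri; rewrite /report; case: pickP => // j' hj [<-] //.
  - by move=> p _ x _; rewrite ffunE.
have hE0 : 0 <= expected_SW E u F phi c st.
  apply: r1_lb hI0 _ => A _; apply: sumr_ge0 => i _; exact: util_ge0.
suff h : OPT E u F phi <= 4 * expected_SW E u F phi c st by lra.
apply/bigmax_leP; split; first lra.
move=> A /injectiveP hA.
have hDC : (Dn A (empty_alloc N V) <= Cn (P0 F))%N.
  apply: subset_leq_card; apply/subsetP => -[i j]; rewrite !inE /= => /and4P [hij _ _ _].
  rewrite hij /=; apply/existsP; exists i; apply/existsP; exists j.
  have rep : forall a b, F a b -> report F a = Some b.
    move=> a b hab; rewrite /report; case: pickP => [b' hb'|hn].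
      by rewrite (Fdeg hab hb').
    by rewrite hn in hab.
  rewrite (rep _ _ hij) (rep j i) ?eqxx //; by rewrite Fsym.
have hk : (unpl (empty_alloc N V) <= #|N|)%N by apply: max_card.
have := @fr_main A hA hphi #|N| (P0 F) (empty_alloc N V) (Dn A (empty_alloc N V))
  hI0 hk (leqnn _) hDC.
rewrite (r1_ext _ _ _ (g := SW E u F phi)); last first.
  by move=> B; rewrite /Fu /SW; apply: eq_bigl => i; rewrite ffunE.
rewrite -/(expected_SW E u F phi c st).
have hSW : SW E u F phi A = (Un A (empty_alloc N V))%:R + phi * (Dn A (empty_alloc N V))%:R.
  rewrite /SW /util big_split /= /Un /Dn !card_sum; congr (_ + _).
    by apply: eq_bigr => i _; rewrite ffunE /= free_empty andbT.
  rewrite -(pair_big xpredT xpredT (fun i j =>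
      ([&& F i j, E (A i) (A j), free (empty_alloc N V) (A i) & free (empty_alloc N V) (A j)])%:R)) /=.
  rewrite mulr_sumr; apply: eq_bigr => i _; rewrite big_mkcond mulr_sumr /=.
  apply: eq_bigr => j _; rewrite !free_empty !andbT.
  by case: (F i j); rewrite ?mulr0.
rewrite hSW; lra.
Qed.

End Pf.

Theorem theorem5p2 (R : realFieldType) (N V : finType) (E : rel V)
    (u : N -> V -> bool) (F : rel N) (phi : R)
    (c : palloc N V -> {ffun N -> V}) (st : strat N V) :
  #|N| = #|V| ->
  symmetric E ->
  symmetric F -> irreflexive F ->
  (forall i j k, F i j -> F i k -> j = k) ->   (* max degree <= 1 *)
  (exists i j, F i j) ->                        (* max degree exactly 1 *)
  1 < phi ->
  completion_ok c ->
  rational E u F phi c st ->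
  OPT E u F phi / 4 <= expected_SW E u F phi c st.
Proof.
move=> _ hE hFs hFi hFd _ hphi hc hr.
exact: (final hc hr hFs hFi hFd hE hphi).
Qed.
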